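(* Let $u_0\in C^1(\Omega_x)\cap\mathcal U$ and suppose $T>0$ is such that the classical solution $u(\cdot,t)=u_0\circ X^{-1}(\cdot,t)$, $t\in\Omega_t$, exists, where $X(x,t)=x+t\,F'(u_0(x))$ is the classical characteristic map (strictly increasing in $x$ for $t\in\Omega_t$). Then for every $K\in\mathbb N$ there is a LRNR $H_r$ with rank $r=3$, degrees of freedom $K$, width $M\sim K$ and depth $L=2$, together with coefficient functions $\gamma(t),\theta(t)$ each of which is linear or constant in $t$, such that $h(t):=h(\gamma(t),\theta(t))\in H_r$ satisfies, for all $t\in\Omega_t$, $$\|u(\cdot,t)-h(t)\|_{L^1(\Omega_x)}\lesssim\frac1K|u_0|_{TV(\Omega_x)}\Big(1+T\|F''\|_{L^\infty(u_0(\Omega_x))}\|u_0'\|_{L^\infty(\Omega_x)}\Big),$$ with an implicit constant independent of $K$, $u_0$, $F$ and $T$.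
   Context: $\Omega_x=(0,1)$, $\Omega_t=(0,T)$, $F\in C^\infty(\mathbb{R})$ strictly convex; $\mathcal U$ is the set of functions of bounded variation on $\Omega_x$ with compact support in $\Omega_x$. $u$ solves $\partial_t u+\partial_x(F(u))=0$, $u(\cdot,0)=u_0$, $u(0,t)=u(1,t)=0$. LRNR (low rank neural representation): fix depth $L$ and widths $M_0=1,M_1,\dots,M_{L-1},M_L=1$, width $M=\max_\ell M_\ell$. A feedforward network is $h(x;W,B)=A^L\circ\sigma\odot A^{L-1}\circ\cdots\circ\sigma\odot A^1(x)$ with $A^\ell(z)=W^\ell z+B^\ell$, $W^\ell\in\mathbb{R}^{M_\ell\times M_{\ell-1}}$, $B^\ell\in\mathbb{R}^{M_\ell}$, and $\sigma(x)=\max\{0,x\}$ applied entrywise. A LRNR of rank $r$ is given by fixed $U_1^\ell,\dots,U_r^\ell$ (weight-shaped) and $V_1^\ell,\dots,V_r^\ell$ (bias-shaped) for each layer $\ell$, each a product $a\bullet b$ of two vectors with $\bullet\in\{\otimes,\otimes_d,{}_d\otimes\}$, where $\otimes$ is the Kronecker product, $a\otimes_d b:=a\otimes\mathrm{diag}(b)$, $a\,{}_d\!\otimes b:=\mathrm{diag}(a)\otimes b$; and coefficient sets $C^\ell,D^\ell\subset\mathbb{R}^r$. Its members are $h(\gamma,\theta):=h(\cdot;W,B)$ with $W^\ell=\sum_{i=1}^r\gamma_i^\ell U_i^\ell$, $B^\ell=\sum_{i=1}^r\theta_i^\ell V_i^\ell$. The degrees of freedom $K$ is the number of stored (unconstrained)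 real parameters defining the $U_i^\ell,V_i^\ell$. *)

(* Defs.v *)
From HB Require Import structures.
From mathcomp Require Import all_boot all_order all_algebra.
From mathcomp Require Import all_classical all_reals all_analysis.
Set Implicit Arguments. Unset Strict Implicit. Unset Printing Implicit Defensive.
Import Order.TTheory GRing.Theory Num.Theory.
Import numFieldNormedType.Exports.
Local Open Scope classical_set_scope.
Local Open Scope ring_scope.

Section LRNR.
Variable R : realType.

Definition relu (z : R) : R := Num.max 0 z.

Record nmat := NMat { nrows : nat; ncols : nat; nent : nat -> nat -> R }.

Definition kron (A B : nmat) : nmat :=
  NMat (nrows A * nrows B) (ncols A * ncols B)
    (fun i j => nent A (i %/ nrows B) (j %/ ncols B) * nent B (i %% nrows B) (j %% ncols B)).

Inductive orient := Col | Row.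

Definition vmat (o : orient) (a : seq R) : nmat :=
  match o with
  | Col => NMat (size a) 1 (fun i _ => nth 0 a i)
  | Row => NMat 1 (size a) (fun _ j => nth 0 a j)
  end.

Definition diagm (a : seq R) : nmat :=
  NMat (size a) (size a) (fun i j => if i == j then nth 0 a i else 0).

(** The three products a (x) b, a (x)_d b := a (x) diag b, a _d(x) b := diag a (x) b *)
Inductive prodkind :=
  | PKron of orient & orient
  | PKronD of orient
  | PDKron of orient.

Record vprod := VProd { pkind : prodkind; pa : seq R; pb : seq R }.

Definition pmat (p : vprod) : nmat :=
  match pkind p with
  | PKron oa ob => kron (vmat oa (pa p)) (vmat ob (pb p))
  | PKronD oa => kron (vmat oa (pa p)) (diagm (pb p))
  | PDKron ob => kron (diagm (pa p)) (vmat ob (pb p))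
  end.

Definition pdof (p : vprod) : nat := size (pa p) + size (pb p).

Definition has_shape (p : vprod) (m n : nat) : Prop :=
  nrows (pmat p) = m /\ ncols (pmat p) = n.

(** A depth L = 2, rank r = 3 LRNR: widths M_0 = 1, M_1 = M, M_2 = 1. *)
Record lrnr2 := LRNR2 {
  lwidth : nat;
  U1 : 'I_3 -> vprod;  V1 : 'I_3 -> vprod;
  U2 : 'I_3 -> vprod;  V2 : 'I_3 -> vprod }.

Definition lrnr2_wf (H : lrnr2) : Prop :=
  (0 < lwidth H)%N /\
  forall i : 'I_3,
    has_shape (U1 H i) (lwidth H) 1 /\ has_shape (V1 H i) (lwidth H) 1 /\
    has_shape (U2 H i) 1 (lwidth H) /\ has_shape (V2 H i) 1 1.

Definition lrnr2_dof (H : lrnr2) : nat :=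
  (\sum_(i < 3) (pdof (U1 H i) + pdof (V1 H i) + pdof (U2 H i) + pdof (V2 H i)))%N.

(** the member h(gamma, theta) of the LRNR, evaluated at x:
    h(x) = W^2 sigma(W^1 x + B^1) + B^2, W^l = sum_i gamma^l_i U^l_i,
    B^l = sum_i theta^l_i V^l_i. *)
Definition lrnr2_eval (H : lrnr2) (g1 th1 g2 th2 : 'I_3 -> R) (x : R) : R :=
  let W1 k := \sum_(i < 3) g1 i * nent (pmat (U1 H i)) k 0 in
  let B1 k := \sum_(i < 3) th1 i * nent (pmat (V1 H i)) k 0 in
  let W2 k := \sum_(i < 3) g2 i * nent (pmat (U2 H i)) 0 k in
  let B2 := \sum_(i < 3) th2 i * nent (pmat (V2 H i)) 0 0 in
  \sum_(k < lwidth H) W2 k * relu (W1 k * x + B1 k) + B2.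

Definition affc (alpha beta : 'I_3 -> R) (t : R) : 'I_3 -> R :=
  fun i => alpha i + beta i * t.

Definition TV (f : R -> R) : \bar R :=
  ereal_sup [set e | exists (n : nat) (s : nat -> R),
     [/\ 0 < s 0%N, s n < 1, (forall i, (i < n)%N -> s i < s i.+1) &
         e = (\sum_(i < n) `|f (s i.+1) - f (s i)|)%:E]].

Definition supnorm (g : R -> R) (A : set R) : \bar R :=
  ereal_sup [set (`|g y|)%:E | y in A].

Definition Omx : set R := `]0, 1[%classic.

End LRNR.

(* Main.v *)
Require Import Defs.
From HB Require Import structures.
From mathcomp Require Import all_boot all_order all_algebra.
From mathcomp Require Import all_classical all_reals all_analysis.
From mathcomp Require Import lra ring zify measurable_realfun.
Import Order.TTheory GRing.Theory Num.Theory.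
Import numFieldNormedType.Exports.
Local Open Scope classical_set_scope.
Local Open Scope ring_scope.
Unset Printing Implicit Defensive.

Section TVlemmas.
Variable R : realType.

Lemma strict_extract (f : R -> R) (q : nat -> R) m :
  (forall j, 0 < q j < 1) -> (forall j, (j < m)%N -> q j <= q j.+1) ->
  exists n (s : nat -> R), [/\ 0 < s 0%N, s n < 1,
    (forall i, (i < n)%N -> s i < s i.+1), s n = q m &
    \sum_(i < n) `|f (s i.+1) - f (s i)| = \sum_(j < m) `|f (q j.+1) - f (q j)|].
Proof.
move=> q01; elim: m => [|m IH] qm.
  exists 0%N, (fun _ => q 0%N); split => //; first by case/andP: (q01 0%N).
  - by case/andP: (q01 0%N).
  - by rewrite !big_ord0.
have [n [s [s0 sn sinc snq ssum]]] : exists n (s : nat -> R), [/\ 0 < s 0%N, s n < 1,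
    (forall i, (i < n)%N -> s i < s i.+1), s n = q m &
    \sum_(i < n) `|f (s i.+1) - f (s i)| = \sum_(j < m) `|f (q j.+1) - f (q j)|].
  by apply: IH => j jm; apply: qm; exact: ltnW.
have := qm m (ltnSn m); rewrite le_eqVlt => /orP[/eqP E|L].
  exists n, s; split => //; first by rewrite snq E.
  by rewrite big_ord_recr /= -E subrr normr0 addr0.
exists n.+1, (fun k => if (k <= n)%N then s k else q m.+1); split.
- by rewrite leq0n.
- by rewrite ltnn; case/andP: (q01 m.+1).
- move=> i; rewrite ltnS => iln; rewrite iln; case: (ltnP i n) => [lin|nli].
    exact: sinc.
  have -> : i = n by apply/eqP; rewrite eqn_leq iln nli.
  by rewrite snq.
- by rewrite ltnn.
- rewrite big_ord_recr /= big_ord_recr /= ltnn leqnn -ssum snq; congr (_ + _).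
  apply: eq_bigr => i _; have /= := ltn_ord i => lin.
  by rewrite (ltnW lin) lin.
Qed.

Lemma TV_ge (f : R -> R) n (s : nat -> R) : 0 < s 0%N -> s n < 1 ->
  (forall i, (i < n)%N -> s i < s i.+1) ->
  ((\sum_(i < n) `|f (s i.+1) - f (s i)|)%:E <= TV f)%E.
Proof.
move=> s0 sn sinc; apply: ereal_sup_ubound; exists n, s; split => //.
Qed.

Lemma TV_ge0 (f : R -> R) : (0 <= TV f)%E.
Proof.
have := @TV_ge f 0%N (fun _ => 1/2); rewrite big_ord0; apply => //.
by rewrite ltr_pdivrMr // mul1r ltr1n.
Qed.

Lemma le_integral_nm (D : set R) (f g : R -> \bar R) :
  (forall x, D x -> (0 <= f x)%E) -> (forall x, D x -> (f x <= g x)%E) ->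
  (\int[lebesgue_measure]_(x in D) f x <= \int[lebesgue_measure]_(x in D) g x)%E.
Proof.
move=> f0 fg; rewrite !ge0_integralE //; last first.
  by move=> x Dx; apply: le_trans (fg _ Dx); exact: f0.
apply: ereal_sup_le => _ [h /= hf <-]; exists h => //= x.
apply: le_trans (hf x) _; rewrite /patch; case: ifP => // /[!inE] Dx.
exact: fg.
Qed.


Lemma step_sum (v : nat -> R) n j : (j <= n)%N ->
  \sum_(i < n) (v i.+1 - v i) * (i < j)%:R = v j - v 0%N.
Proof.
elim: n j => [|n IH] j.
  by rewrite leqn0 => /eqP ->; rewrite big_ord0 subrr.
rewrite leq_eqVlt => /orP[/eqP->|jn].
  rewrite big_ord_recr /= ltnSn mulr1 -[v n.+1 - v 0%N](subrKA (v n)) addrC.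
  congr (_ + _); rewrite -(IH n (leqnn n)).
  by apply: eq_bigr => i _; rewrite ltn_ord (ltn_trans (ltn_ord i) (ltnSn n)).
rewrite ltnS in jn.
rewrite big_ord_recr /= -(IH j jn) (_ : (n < j)%N = false) ?mulr0 ?addr0 //.
by apply/negbTE; rewrite -leqNgt.
Qed.

Definition ramp (eps z : R) := (relu z - relu (z - eps)) / eps.

Lemma relu_pos (z : R) : 0 <= z -> relu z = z.
Proof. move=> h; rewrite /relu; exact: max_r. Qed.
Lemma relu_neg (z : R) : z <= 0 -> relu z = 0.
Proof. move=> h; rewrite /relu; exact: max_l. Qed.

Lemma ramp_err (eps z : R) : 0 < eps ->
  `|((0 <= z)%R)%:R - ramp eps z| <= (((0 <= z) && (z < eps))%R)%:R.
Proof.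
move=> e0; rewrite /ramp.
have [z0|z0] := ltP z 0.
  have h1 : relu z = 0 by apply: relu_neg; lra.
  have h2 : relu (z - eps) = 0 by apply: relu_neg; lra.
  by rewrite h1 h2 subrr mul0r subr0 normr0.
have [ze|ze] := ltP z eps.
  have h1 : relu z = z by apply: relu_pos; lra.
  have h2 : relu (z - eps) = 0 by apply: relu_neg; lra.
  rewrite h1 h2 subr0 /= ger0_norm.
    by rewrite lerBlDr lerDl divr_ge0 // ltW.
  by rewrite subr_ge0 ler_pdivrMr // mul1r ltW.
have h1 : relu z = z by apply: relu_pos; lra.
have h2 : relu (z - eps) = z - eps by apply: relu_pos; lra.
rewrite h1 h2 (_ : z - (z - eps) = eps); last by ring.
by rewrite divff ?gt_eqF // subrr normr0.
Qed.

Lemma indicE (l r y : R) : (\1_(`[l, r[) y : R) = (((l <= y) && (y < r))%R)%:R.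
Proof. by rewrite /indic mem_setE in_itv. Qed.


Lemma der2 (F : R -> R) (HF : forall (n : nat) (x : R), derivable (derive1n n F) x 1) (x : R) :
  is_derive x 1 (derive1 F) (derive1n 2 F x).
Proof.
have h : derivable (derive1 F) x 1 := HF 1%N x.
have -> : derive1n 2 F x = 'D_1 (derive1 F) x.
  by rewrite -derive1E.
exact: derivableP h.
Qed.

Lemma int_indic_sum (D : set R) (mD : measurable D) n (w l r : nat -> R) :
  (forall i, (i < n)%N -> 0 <= w i) -> (forall i, (i < n)%N -> l i <= r i) ->
  (\int[lebesgue_measure]_(y in D)
      (\sum_(i < n) w i * (((l i <= y) && (y < r i))%R)%:R)%:E
   <= (\sum_(i < n) w i * (r i - l i))%:E)%E.
Proof.
move=> w0 lr.
have -> : (\int[lebesgue_measure]_(y in D)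
      (\sum_(i < n) w i * (((l i <= y) && (y < r i))%R)%:R)%:E =
    \int[lebesgue_measure]_(y in D)
      (\sum_(i < n) (w i * \1_(`[l i, r i[) y)%:E))%E.
  apply: eq_integral => y _; rewrite sumEFin; congr (_%:E).
  by apply: eq_bigr => i _; rewrite indicE.
rewrite ge0_integral_sum //; last first.
  move=> i y _; rewrite lee_fin; apply: mulr_ge0; first exact: w0.
  by rewrite indicE.
  move=> i; apply/measurable_EFinP; apply: measurable_funM.
    exact: measurable_cst.
  exact: measurable_indic.
rewrite -sumEFin; apply: lee_sum => i _.
have -> : (\int[lebesgue_measure]_(x in D) (w i * \1_(`[l i, r i[) x)%:E =
    (w i)%:E * \int[lebesgue_measure]_(x in D) (\1_(`[l i, r i[) x)%:E)%E.
  apply: (@integralZl_indic _ _ _ (@lebesgue_measure R) D mD (fun _ => [set` `[l i, r i[]) (w i)).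
  - by move=> wn; have := w0 i (ltn_ord i); rewrite leNgt wn.
  - exact: measurable_itv.
rewrite (@integral_indic _ _ _ (@lebesgue_measure R) D mD _ (measurable_itv `[l i, r i[)).
rewrite EFinM; apply: lee_wpmul2l; first by rewrite lee_fin; exact: w0.
have sub : (@lebesgue_measure R ([set` `[l i, r i[] `&` D) <=
    @lebesgue_measure R [set` `[l i, r i[])%E.
  apply: le_measure; last exact: subIsetl.
  - by rewrite inE; apply: measurableI => //; exact: measurable_itv.
  - by rewrite inE; exact: measurable_itv.
apply: le_trans sub _.
rewrite lebesgue_measure_itv /=.
case: ifP => _; first by rewrite EFinB.
by rewrite lee_fin subr_ge0; exact: lr.
Qed.

Lemma pair_sum (f : nat -> R) n :
  \sum_(j < n.*2) f j = \sum_(i < n) (f i.*2 + f i.*2.+1).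
Proof.
elim: n => [|n IH]; first by rewrite !big_ord0.
by rewrite doubleS !big_ord_recr /= IH addrA.
Qed.

End TVlemmas.
Arguments step_sum {R}.
Arguments ramp {R}.
Arguments ramp_err {R}.
Arguments indicE {R}.
Arguments le_integral_nm {R}.
Arguments der2 {R}.
Arguments int_indic_sum {R}.
Arguments pair_sum {R}.

Section Net.
Variable R : realType.
Variable M : nat.
Variables (Wv P0 P1 : nat -> R).

Definition colv (f : nat -> R) := VProd (PKron Col Col) (mkseq f M) [:: 1].
Definition rowv (f : nat -> R) := VProd (PKron Row Row) (mkseq f M) [:: 1].

Definition netH : lrnr2 R := LRNR2 M
  (fun i : 'I_3 => if val i == 0%N then colv (fun _ => 1) else colv (fun _ => 0))
  (fun i : 'I_3 => if val i == 0%N then colv P0 else if val i == 1%N then colv P1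
                   else colv (fun _ => 0))
  (fun i : 'I_3 => if val i == 0%N then rowv Wv else rowv (fun _ => 0))
  (fun i : 'I_3 => VProd (PKron Col Col) [:: 0] [:: 1]).

Lemma colv_ent f k : (k < M)%N -> nent (pmat (colv f)) k 0 = f k.
Proof. by move=> kM; rewrite /pmat /= divn1 modn1 /= nth_mkseq // mulr1. Qed.

Lemma rowv_ent f k : (k < M)%N -> nent (pmat (rowv f)) 0 k = f k.
Proof. by move=> kM; rewrite /pmat /= divn1 modn1 /= nth_mkseq // mulr1. Qed.

Definition c1 (i : 'I_3) : R := if val i == 1%N then 0 else 1.
Definition d1 (i : 'I_3) : R := if val i == 1%N then 1 else 0.

Lemma netH_eval t y :
  lrnr2_eval netH (affc (fun _ => 1) (fun _ => 0) t) (affc c1 d1 t)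
     (affc (fun _ => 1) (fun _ => 0) t) (affc (fun _ => 1) (fun _ => 0) t) y =
  \sum_(k < M) Wv k * relu (y + (P0 k + t * P1 k)).
Proof.
rewrite /lrnr2_eval /=.
rewrite [X in _ + X](_ : _ = 0); last first.
  by rewrite !big_ord_recr big_ord0 /= /pmat /= !mul0r !mulr0 !addr0.
rewrite addr0; apply: eq_bigr => k _; have kM := ltn_ord k.
rewrite !big_ord_recr !big_ord0 /= /affc /c1 /d1 /=.
rewrite !divn1 !modn1 !nth_mkseq //=.
congr (_ * relu _); ring.
Qed.

Lemma colv_sh f : has_shape (colv f) M 1.
Proof. by rewrite /has_shape /pmat /= size_mkseq !muln1. Qed.

Lemma rowv_sh f : has_shape (rowv f) 1 M.
Proof. by rewrite /has_shape /pmat /= size_mkseq !muln1. Qed.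

Lemma netH_wf : (0 < M)%N -> lrnr2_wf netH.
Proof.
move=> M0; split => // i /=; split; [|split; [|split]].
- by case: ifP => _; exact: colv_sh.
- by case: ifP => _; [|case: ifP => _]; exact: colv_sh.
- by case: ifP => _; exact: rowv_sh.
- by [].
Qed.

Lemma netH_dof : lrnr2_dof netH = (9 * M + 15)%N.
Proof.
rewrite /lrnr2_dof !big_ord_recr big_ord0 /= /pdof /= !size_mkseq.
ring.
Qed.

End Net.

Section Main.
Variable R : realType.
Variables (F u0 : R -> R) (T : R) (u : R -> R -> R) (a b : R).
Hypothesis HF : forall (n : nat) (x : R), derivable (derive1n n F) x 1.
Hypothesis Hd : forall x : R, 0 < x < 1 -> derivable u0 x 1.
Hypotheses (ha : 0 < a) (hab : a <= b) (hb : b < 1).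
Hypothesis hz : forall x, (x < a) || (b < x) -> u0 x = 0.

Lemma u0_out (x : R) : x <= 0 \/ 1 <= x -> u0 x = 0.
Proof.
by move=> [x0|x1]; apply: hz; apply/orP; [left|right]; move: ha hb; lra.
Qed.

Lemma u0_cont : continuous u0.
Proof.
move=> x.
have [xa|ax] := ltP x a.
  apply: (near_cst_continuous 0); near=> y; apply: hz.
  by rewrite (_ : y < a) //; near: y; exact: lt_nbhsl.
have [bx|xb] := ltP b x.
  apply: (near_cst_continuous 0); near=> y; apply: hz.
  by rewrite (_ : b < y) ?orbT //; near: y; exact: lt_nbhsr.
apply: differentiable_continuous; apply/derivable1_diffP; apply: Hd.
apply/andP; split; move: ha hb; lra.
Unshelve. all: by end_near.
Qed.

Definition cl (x : R) := if x < a then a / 2 else if b < x then (b + 1) / 2 else x.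

Lemma cl_u0 x : u0 (cl x) = u0 x.
Proof.
rewrite /cl; case: ifP => xa.
  by rewrite !hz // ?xa //; apply/orP; left; move: ha; lra.
case: ifP => bx //.
by rewrite !hz // ?bx ?orbT //; apply/orP; right; move: hb; lra.
Qed.

Lemma cl01 x : 0 < cl x < 1.
Proof.
move: ha hab hb => ? ? ?.
rewrite /cl; case: (ltP x a) => xa; first by apply/andP; split; lra.
by case: (ltP b x) => bx; apply/andP; split; lra.
Qed.

Lemma cl_mono x y : x <= y -> cl x <= cl y.
Proof.
move: ha hab hb => ? ? ?.
rewrite /cl => xy; case: (ltP x a) => xa; case: (ltP y a) => ya; try lra;
  case: (ltP b x) => xb; case: (ltP b y) => yb; lra.
Qed.

Lemma pvar m (p : nat -> R) : (forall j, (j < m)%N -> p j <= p j.+1) ->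
  ((\sum_(j < m) `|u0 (p j.+1) - u0 (p j)|)%:E <= TV u0)%E.
Proof.
move=> pm.
have [n [s [s0 sn sinc _ ssum]]] := @strict_extract R u0 (fun j => cl (p j)) m
   (fun j => cl01 (p j)) (fun j jm => cl_mono _ _ (pm j jm)).
have -> : \sum_(j < m) `|u0 (p j.+1) - u0 (p j)| =
   \sum_(j < m) `|u0 (cl (p j.+1)) - u0 (cl (p j))|.
  by apply: eq_bigr => j _; rewrite !cl_u0.
by rewrite -ssum; exact: TV_ge.
Qed.


Lemma Fp_cont : continuous (derive1 F).
Proof.
move=> x; apply: differentiable_continuous; apply/derivable1_diffP.
exact: (HF 1%N x).
Qed.

Definition Xf (t x : R) := x + t * derive1 F (u0 x).

Lemma X_cont t : continuous (Xf t).
Proof.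
move=> x.
have -> : Xf t = (id + (cst t \* (derive1 F \o u0)))%R by [].
apply: continuousD; first exact: cvg_id.
apply: continuousM; first exact: cvg_cst.
apply: continuous_comp; [exact: u0_cont | exact: Fp_cont].
Qed.

Lemma X_out t x : x <= 0 \/ 1 <= x -> Xf t x = x + t * derive1 F 0.
Proof. by move=> h; rewrite /Xf u0_out. Qed.

Hypothesis HX : forall t : R, 0 < t < T ->
       {in `]0, 1[ &, {homo (fun x => x + t * derive1 F (u0 x)) : x y / x < y}}.

Lemma X_near0 t x : x < a -> Xf t x = x + t * derive1 F 0.
Proof. by move=> xa; rewrite /Xf hz // xa. Qed.

Lemma X_near1 t x : b < x -> Xf t x = x + t * derive1 F 0.
Proof. by move=> xb; rewrite /Xf hz // xb orbT. Qed.

Lemma X_mono t x y : 0 < t < T -> 0 <= x -> x < y -> y <= 1 -> Xf t x < Xf t y.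
Proof.
move=> tT x0 xy y1; have hh := HX t tT.
have in01 (z : R) : 0 < z < 1 -> z \in `]0, 1[ by move=> h; rewrite in_itv.
move: ha hab hb => ? ? ?.
have X0 : forall z, z <= 0 -> Xf t z = z + t * derive1 F 0.
  by move=> z z0; apply: X_out; left.
have X1 : forall z, 1 <= z -> Xf t z = z + t * derive1 F 0.
  by move=> z z0; apply: X_out; right.
have [x0'|x0'] := eqVneq x 0.
  have [y1'|y1'] := eqVneq y 1.
    by rewrite x0' y1' (X0 0) // (X1 1) //; lra.
  pose z := Num.min y a / 2.
  have hz0 : 0 < z by rewrite /z divr_gt0 // lt_min; apply/andP; split; lra.
  have hzy : z < y.
    rewrite /z; have : Num.min y a <= y by rewrite ge_min lexx.
    have : 0 < Num.min y a by rewrite lt_min; apply/andP; split; lra.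
    lra.
  have hza : z < a.
    rewrite /z; have : Num.min y a <= a by rewrite ge_min lexx orbT.
    have : 0 < Num.min y a by rewrite lt_min; apply/andP; split; lra.
    lra.
  have : Xf t z < Xf t y.
    by apply: hh => //; apply: in01; apply/andP; split; lra.
  by rewrite x0' (X0 0) // (X_near0 t z hza); lra.
have x0'' : 0 < x by rewrite lt_neqAle eq_sym x0' x0.
have [y1'|y1'] := eqVneq y 1.
  pose z := (Num.max x b + 1) / 2.
  have hxb1 : Num.max x b < 1 by rewrite gt_max; apply/andP; split; lra.
  have hzx : x < z.
    rewrite /z; have : x <= Num.max x b by rewrite le_max lexx.
    lra.
  have hzb : b < z.
    rewrite /z; have : b <= Num.max x b by rewrite le_max lexx orbT.
    lra.
  have hz1 : z < 1 by rewrite /z; lra.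
  have : Xf t x < Xf t z.
    by apply: hh => //; apply: in01; apply/andP; split; lra.
  by rewrite y1' (X1 1) // (X_near1 t z hzb); lra.
have y1'' : y < 1 by rewrite lt_neqAle y1' y1.
by apply: hh => //; apply: in01; apply/andP; split; lra.
Qed.


Hypothesis Hu : forall t : R, 0 < t < T ->
   forall x : R, u (x + t * derive1 F (u0 x)) t = u0 x.

Section Grid.
Variable N : nat.
Hypothesis HN : (0 < N)%N.

Definition xg (i : nat) : R := i%:R / N%:R.
Definition vg i := u0 (xg i).
Definition Xg t i := Xf t (xg i).

Lemma Npos : 0 < N%:R :> R.
Proof. by rewrite ltr0n. Qed.

Lemma xg0 : xg 0 = 0.
Proof. by rewrite /xg mul0r. Qed.

Lemma xgN : xg N = 1.
Proof. by rewrite /xg divff // gt_eqF // Npos. Qed.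

Lemma xg_ge0 i : 0 <= xg i.
Proof. by rewrite /xg divr_ge0 // ler0n. Qed.

Lemma xg_le1 i : (i <= N)%N -> xg i <= 1.
Proof. by move=> iN; rewrite /xg ler_pdivrMr ?Npos // mul1r ler_nat. Qed.

Lemma xg_lt i j : (i < j)%N -> xg i < xg j.
Proof. by move=> ij; rewrite /xg ltr_pM2r ?invr_gt0 ?Npos // ltr_nat. Qed.

Lemma xg_step i : xg i.+1 - xg i = N%:R^-1.
Proof. by rewrite /xg -mulrBl -natrB // subSnn mul1r. Qed.

Lemma vg0 : vg 0 = 0.
Proof. by rewrite /vg xg0 u0_out //; left. Qed.

Lemma vgN : vg N = 0.
Proof. by rewrite /vg xgN u0_out //; right. Qed.

Lemma Xg_mono t i j : 0 < t < T -> (i < j)%N -> (j <= N)%N -> Xg t i < Xg t j.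
Proof.
move=> tT ij jN; apply: X_mono => //; [exact: xg_ge0 | exact: xg_lt | exact: xg_le1].
Qed.

Lemma Xg_le t i j : 0 < t < T -> (i <= j)%N -> (j <= N)%N -> Xg t i <= Xg t j.
Proof.
move=> tT; rewrite leq_eqVlt => /orP[/eqP->|ij] jN //.
exact/ltW/Xg_mono.
Qed.

Lemma Xg0 t : Xg t 0 = t * derive1 F 0.
Proof. by rewrite /Xg xg0 X_out ?add0r //; left. Qed.

Lemma XgN t : Xg t N = 1 + t * derive1 F 0.
Proof. by rewrite /Xg xgN X_out //; right. Qed.

Lemma u_left t y : 0 < t < T -> y < Xg t 0 -> u y t = 0.
Proof.
move=> tT; rewrite Xg0 => yl.
have x0 : y - t * derive1 F 0 <= 0 by lra.
have ux : u0 (y - t * derive1 F 0) = 0 by apply: u0_out; left.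
by have := Hu t tT (y - t * derive1 F 0); rewrite ux subrK.
Qed.

Lemma u_right t y : 0 < t < T -> Xg t N <= y -> u y t = 0.
Proof.
move=> tT; rewrite XgN => yl.
have x0 : 1 <= y - t * derive1 F 0 by lra.
have ux : u0 (y - t * derive1 F 0) = 0 by apply: u0_out; right.
by have := Hu t tT (y - t * derive1 F 0); rewrite ux subrK.
Qed.

Lemma u_cell t y j : 0 < t < T -> (j < N)%N -> Xg t j <= y <= Xg t j.+1 ->
  exists2 x, xg j <= x <= xg j.+1 & u y t = u0 x.
Proof.
move=> tT jN /andP[l r].
have le : Xg t j <= Xg t j.+1 by apply: Xg_le.
have [x xin Xx] : exists2 x, x \in `[xg j, xg j.+1] & Xf t x = y.
  apply: IVT; first exact/ltW/xg_lt.
    exact: continuous_subspaceT (X_cont t).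
  by rewrite ge_min le_max l r orbT.
exists x; first by move: xin; rewrite in_itv.
by rewrite -Xx; exact: Hu t tT x.
Qed.

Lemma locate t y : 0 < t < T -> Xg t 0 <= y -> y < Xg t N ->
  exists j, [/\ (j < N)%N, Xg t j <= y & y < Xg t j.+1].
Proof.
move=> tT y0 yN.
suff : forall n, (n <= N)%N -> y < Xg t n ->
   exists j, [/\ (j < n)%N, Xg t j <= y & y < Xg t j.+1].
  by move/(_ N (leqnn N) yN) => [j [jN *]]; exists j.
elim => [|n IH] nN yn; first by move: y0; rewrite leNgt yn.
have [yn'|yn'] := ltP y (Xg t n).
  by have [j [jn *]] := IH (ltnW nN) yn'; exists j; split => //; exact: ltnW.
by exists n.
Qed.


Definition Sf (t y : R) := \sum_(i < N) (vg i.+1 - vg i) * ((Xg t i.+1 <= y)%R)%:R.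
Definition hf (t y : R) := \sum_(i < N) (vg i.+1 - vg i) * ramp (N%:R^-1) (y - Xg t i.+1).

Lemma S_eq (t y : R) j : (j <= N)%N ->
  (forall i, (i < N)%N -> (Xg t i.+1 <= y) = (i < j)%N) -> Sf t y = vg j.
Proof.
move=> jN H; rewrite /Sf.
rewrite (eq_bigr (fun i : 'I_N => (vg i.+1 - vg i) * ((i < j)%N)%:R)).
  by rewrite (step_sum vg N j jN) vg0 subr0.
by move=> i _; rewrite H.
Qed.

Variable xi : nat -> R.
Hypothesis Hxi : forall i, (i < N)%N -> forall z, xg i <= z <= xg i.+1 ->
  `|u0 z - vg i| <= `|u0 (xi i) - vg i|.
Definition osc i := `|u0 (xi i) - vg i|.

Lemma cell_bound (t y : R) : 0 < t < T ->
  `|u y t - Sf t y| <= \sum_(i < N) osc i * ((((Xg t i <= y) && (y < Xg t i.+1)))%R)%:R.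
Proof.
move=> tT.
have G0 : forall (P : 'I_N -> bool), 0 <= \sum_(i < N | P i) osc i * ((((Xg t i <= y) && (y < Xg t i.+1)))%R)%:R.
  by move=> P; apply: sumr_ge0 => i _; apply: mulr_ge0 => //; exact: normr_ge0.
have [y0|y0] := ltP y (Xg t 0).
  rewrite u_left // (S_eq t y 0) ?vg0 //; first by rewrite subrr normr0 (G0 xpredT).
  move=> i iN; rewrite ltn0; apply/negbTE; rewrite -ltNge.
  exact: lt_trans y0 (Xg_mono t 0 i.+1 tT (ltn0Sn i) iN).
have [yN|yN] := ltP y (Xg t N); last first.
  rewrite u_right // (S_eq t y N) ?vgN //; first by rewrite subrr normr0 (G0 xpredT).
  move=> i iN; rewrite iN.
  exact: le_trans (Xg_le t i.+1 N tT iN (leqnn N)) yN.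
have [j [jN lj rj]] := locate t y tT y0 yN.
rewrite (S_eq t y j (ltnW jN)); last first.
  move=> i iN; case: (ltnP i j) => ij.
    exact: le_trans (Xg_le t i.+1 j tT ij (ltnW jN)) lj.
  apply/negbTE; rewrite -ltNge.
  exact: lt_le_trans rj (Xg_le t j.+1 i.+1 tT ij iN).
have [x xin ->] := u_cell t y j tT jN (introT andP (conj lj (ltW rj))).
rewrite (bigD1 (Ordinal jN)) //= lj rj mulr1.
apply: le_trans (Hxi j jN x xin) _.
by rewrite lerDl (G0 (fun i => i != Ordinal jN)).
Qed.

Lemma ramp_bound (t y : R) :
  `|Sf t y - hf t y| <= \sum_(i < N) `|vg i.+1 - vg i| *
      ((((Xg t i.+1 <= y) && (y < Xg t i.+1 + N%:R^-1)))%R)%:R.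
Proof.
rewrite /Sf /hf -sumrB.
apply: le_trans (ler_norm_sum _ _ _) _.
apply: ler_sum => i _; rewrite -mulrBr normrM.
apply: ler_wpM2l => //.
have := ramp_err (N%:R^-1) (y - Xg t i.+1) (ltac:(by rewrite invr_gt0 Npos)).
by rewrite subr_ge0 ltrBlDr (addrC (N%:R^-1)).
Qed.


Definition SA := supnorm (derive1n 2 F) (u0 @` (@Omx R)).
Definition SB := supnorm (derive1 u0) (@Omx R).

Lemma Omx_in (y : R) : 0 < y < 1 -> (@Omx R) y.
Proof. by move=> h; rewrite /Omx /= in_itv. Qed.

Lemma SA_ub y : (@Omx R) y -> ((`|derive1n 2 F (u0 y)|)%:E <= SA)%E.
Proof. by move=> Oy; apply: ereal_sup_ubound; exists (u0 y) => //; exists y. Qed.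

Lemma SB_ub y : (@Omx R) y -> ((`|derive1 u0 y|)%:E <= SB)%E.
Proof. by move=> Oy; apply: ereal_sup_ubound; exists y. Qed.

Lemma half01 : 0 < (1 / 2 : R) < 1.
Proof. apply/andP; split; lra. Qed.

Lemma SAB_ge0 : (0 <= SA * SB)%E.
Proof.
apply: mule_ge0.
  exact: le_trans (SA_ub _ (Omx_in _ half01)).
exact: le_trans (SB_ub _ (Omx_in _ half01)).
Qed.

Lemma mvt_Fp (p q : R) : p < q ->
  exists2 z, p < z < q & derive1 F q - derive1 F p = derive1n 2 F z * (q - p).
Proof.
move=> pq.
have [z zin eq] : exists2 z, z \in `]p, q[ & derive1 F q - derive1 F p = derive1n 2 F z * (q - p).
  apply: (@MVT R (derive1 F) (derive1n 2 F) p q pq).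
    by move=> x _; exact: der2 F HF x.
  exact: continuous_subspaceT Fp_cont.
by exists z => //; move: zin; rewrite in_itv.
Qed.

Lemma mvt_u0 i : (i < N)%N ->
  exists2 z, (@Omx R) z & vg i.+1 - vg i = derive1 u0 z * N%:R^-1.
Proof.
move=> iN.
have [z zin eq] : exists2 z, z \in `]xg i, xg i.+1[ & u0 (xg i.+1) - u0 (xg i) = derive1 u0 z * (xg i.+1 - xg i).
  apply: (@MVT R u0 (derive1 u0) (xg i) (xg i.+1)); first exact: xg_lt.
    move=> x; rewrite in_itv => /andP[l r].
    rewrite derive1E; apply: derivableP; apply: Hd; apply/andP; split.
      exact: le_lt_trans (xg_ge0 i) l.
    exact: lt_le_trans r (xg_le1 _ iN).
  exact: continuous_subspaceT u0_cont.
exists z; last by rewrite /vg eq xg_step.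
move: zin; rewrite in_itv => /andP[l r]; apply: Omx_in; apply/andP; split.
  exact: le_lt_trans (xg_ge0 i) l.
exact: lt_le_trans r (xg_le1 _ iN).
Qed.

Lemma img_u0 i v : (i < N)%N -> (vg i <= v <= vg i.+1) \/ (vg i.+1 <= v <= vg i) ->
  (u0 @` (@Omx R)) v.
Proof.
move=> iN hv.
have [c cin uc] : exists2 c, c \in `[xg i, xg i.+1] & u0 c = v.
  apply: (@IVT R u0 (xg i) (xg i.+1) v); first exact/ltW/xg_lt.
    exact: continuous_subspaceT u0_cont.
  by case: hv => /andP[l r]; rewrite ge_min le_max l r ?orbT.
move: cin; rewrite in_itv => /andP[l r].
have c0 : 0 <= c by exact: le_trans (xg_ge0 i) l.
have c1 : c <= 1 by exact: le_trans r (xg_le1 _ iN).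
have [c0'|c0'] := eqVneq c 0.
  exists (a / 2); first by apply: Omx_in; move: ha hab hb => ? ? ?; apply/andP; split; lra.
  have e1 : u0 (a / 2) = 0 by apply: hz; apply/orP; left; move: ha => ?; lra.
  have e2 : u0 c = 0 by rewrite c0'; apply: u0_out; left.
  by rewrite e1 -uc e2.
have [c1'|c1'] := eqVneq c 1.
  exists (a / 2); first by apply: Omx_in; move: ha hab hb => ? ? ?; apply/andP; split; lra.
  have e1 : u0 (a / 2) = 0 by apply: hz; apply/orP; left; move: ha => ?; lra.
  have e2 : u0 c = 0 by rewrite c1'; apply: u0_out; right.
  by rewrite e1 -uc e2.
exists c => //; apply: Omx_in; apply/andP; split.
  by rewrite lt_neqAle eq_sym c0' c0.
by rewrite lt_neqAle c1' c1.
Qed.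


Lemma len_bound t i : 0 < t < T -> (i < N)%N ->
  exists r : R, [/\ 0 <= r, (r%:E <= SA * SB)%E &
     Xg t i.+1 - Xg t i <= N%:R^-1 * (1 + T * r)].
Proof.
move=> tT iN.
have [z Oz ez] := mvt_u0 i iN.
have e0 : Xg t i.+1 - Xg t i = N%:R^-1 + t * (derive1 F (vg i.+1) - derive1 F (vg i)).
  by rewrite /Xg /Xf /vg -(xg_step i); ring.
have Ni : 0 < N%:R^-1 :> R by rewrite invr_gt0 Npos.
have t0 : 0 <= t by case/andP: tT => /ltW.
have tT' : t <= T by case/andP: tT => _ /ltW.
have [veq|vne] := eqVneq (vg i) (vg i.+1).
  exists 0; split => //; first exact: SAB_ge0.
  by rewrite e0 veq subrr mulr0 addr0 mulr0 addr0 mulr1.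
have [zeta hz' ezeta] : exists2 zeta,
    (vg i <= zeta <= vg i.+1) \/ (vg i.+1 <= zeta <= vg i) &
    `|derive1 F (vg i.+1) - derive1 F (vg i)| = `|derive1n 2 F zeta| * `|vg i.+1 - vg i|.
  case: (ltgtP (vg i) (vg i.+1)) vne => // lt _.
    have [zz h1 h2] := mvt_Fp _ _ lt.
    exists zz; last by rewrite h2 normrM.
    by left; case/andP: h1 => l r; rewrite !ltW.
  have [zz h1 h2] := mvt_Fp _ _ lt.
  exists zz; first by right; case/andP: h1 => l r; rewrite !ltW.
  by rewrite distrC h2 normrM distrC.
have [c Oc uc] : (u0 @` (@Omx R)) zeta.
  exact: (img_u0 i zeta iN hz').
exists (`|derive1n 2 F zeta| * `|derive1 u0 z|); split.
- by apply: mulr_ge0; exact: normr_ge0.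
- rewrite EFinM; apply: lee_pmul => //; first by rewrite -uc; exact: SA_ub.
  exact: SB_ub.
- rewrite e0.
  have h1 : t * (derive1 F (vg i.+1) - derive1 F (vg i)) <=
            t * `|derive1 F (vg i.+1) - derive1 F (vg i)|.
    by apply: ler_wpM2l => //; exact: ler_norm.
  apply: le_trans (lerD (lexx _) h1) _.
  rewrite ezeta ez normrM (ger0_norm (ltW Ni)).
  have A0 : 0 <= `|derive1n 2 F zeta| by exact: normr_ge0.
  have B0 : 0 <= `|derive1 u0 z| by exact: normr_ge0.
  move: A0 B0; set A1 := `|derive1n 2 F zeta|; set B1 := `|derive1 u0 z| => A0 B0.
  have P : 0 <= A1 * B1 * N%:R^-1 by rewrite mulr_ge0 // ?mulr_ge0 // ltW.
  have : 0 <= (T - t) * (A1 * B1 * N%:R^-1) by rewrite mulr_ge0 // subr_ge0.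
  move: Ni; set n := N%:R^-1 => Ni.
  nra.
Qed.


Hypothesis Hxi_in : forall i, (i < N)%N -> xg i <= xi i <= xg i.+1.

Lemma osc_TV : ((\sum_(i < N) osc i)%:E <= TV u0)%E.
Proof.
pose p j := if odd j then xi j./2 else xg j./2.
have pm : forall j, (j < N.*2)%N -> p j <= p j.+1.
  move=> j jN; have hj : (j./2 < N)%N by rewrite ltn_half_double.
  rewrite /p /=; case: (boolP (odd j)) => oj /=.
    rewrite uphalf_half oj add1n.
    by case/andP: (Hxi_in _ hj).
  rewrite uphalf_half (negbTE oj) add0n.
  by case/andP: (Hxi_in _ hj).
have := pvar (N.*2) p pm.
apply: le_trans; rewrite lee_fin (pair_sum (fun j => `|u0 (p j.+1) - u0 (p j)|)); apply: ler_sum => i _.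
have e1 : p i.*2 = xg i by rewrite /p odd_double doubleK.
have e2 : p i.*2.+1 = xi i.
  by rewrite /p /= odd_double /= uphalf_half odd_double doubleK.
by rewrite e1 e2 /osc /vg lerDl normr_ge0.
Qed.

Lemma c_TV : ((\sum_(i < N) `|vg i.+1 - vg i|)%:E <= TV u0)%E.
Proof. by apply: (pvar N xg) => j _; apply/ltW/xg_lt. Qed.

Lemma SA_ge0 : (0 <= SA)%E.
Proof. exact: le_trans (SA_ub _ (Omx_in _ half01)). Qed.

Lemma SB_ge0 : (0 <= SB)%E.
Proof. exact: le_trans (SB_ub _ (Omx_in _ half01)). Qed.

Lemma int_bound t : 0 < t < T ->
 (\int[lebesgue_measure]_(x in (@Omx R)) (`|u x t - hf t x|)%:E <=
   2%:E * (N%:R^-1)%:E * TV u0 * (1 + T%:E * SA * SB))%E.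
Proof.
move=> tT.
have T0 : 0 <= T by case/andP: tT => t0 tT'; exact: ltW (lt_trans t0 tT').
have n0 : 0 < N%:R^-1 :> R by rewrite invr_gt0 Npos.
move: n0; set n := N%:R^-1 => n0.
pose W k := if (k < N)%N then osc k else `|vg (k - N).+1 - vg (k - N)|.
pose L k := if (k < N)%N then Xg t k else Xg t (k - N).+1.
pose Rr k := if (k < N)%N then Xg t k.+1 else Xg t (k - N).+1 + n.
have mO : measurable (@Omx R) by exact: measurable_itv.
have step1 : (\int[lebesgue_measure]_(x in (@Omx R)) (`|u x t - hf t x|)%:E <=
   \int[lebesgue_measure]_(y in (@Omx R))
     (\sum_(k < N + N) W k * (((L k <= y) && (y < Rr k))%R)%:R)%:E)%E.
  apply: le_integral_nm => y _; first by rewrite lee_fin normr_ge0.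
  rewrite lee_fin big_split_ord /=.
  rewrite (eq_bigr (fun i : 'I_N => osc i * ((((Xg t i <= y) && (y < Xg t i.+1)))%R)%:R));
    last by move=> i _; rewrite /W /L /Rr /= ltn_ord.
  rewrite [X in _ <= _ + X](eq_bigr (fun i : 'I_N => `|vg i.+1 - vg i| *
        ((((Xg t i.+1 <= y) && (y < Xg t i.+1 + n)))%R)%:R));
    last by move=> i _; rewrite /W /L /Rr /= ltnNge leq_addr /= addKn.
  apply: le_trans (ler_distD (Sf t y) _ _) _.
  by apply: lerD; [exact: cell_bound | exact: ramp_bound].
apply: le_trans step1 _.
apply: le_trans (int_indic_sum _ mO (N + N) W L Rr _ _) _.
- by move=> k _; rewrite /W; case: ifP => _; exact: normr_ge0.
- move=> k kN; rewrite /L /Rr; case: ifP => kn.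
    by apply: Xg_le => //; exact: leqnSn.
  by rewrite lerDl ltW.
rewrite big_split_ord /=.
rewrite (eq_bigr (fun i : 'I_N => osc i * (Xg t i.+1 - Xg t i)));
  last by move=> i _; rewrite /W /L /Rr /= ltn_ord.
rewrite [X in _ + X](eq_bigr (fun i : 'I_N => `|vg i.+1 - vg i| * n)); last first.
  by move=> i _; rewrite /W /L /Rr /= ltnNge leq_addr /= addKn addrAC subrr add0r.
set P := (1 + T%:E * SA * SB)%E.
have P0 : (0 <= P)%E.
  apply: adde_ge0; first exact: lee01.
  apply: mule_ge0; last exact: SB_ge0.
  by apply: mule_ge0; [rewrite lee_fin | exact: SA_ge0].
set Q := ((n%:E) * P)%E.
have Q0 : (0 <= Q)%E by apply: mule_ge0 => //; rewrite lee_fin ltW.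
have TVQ1 : ((\sum_(i < N) osc i * (Xg t i.+1 - Xg t i))%:E <= TV u0 * Q)%E.
  rewrite -sumEFin.
  apply: (@le_trans _ _ (\sum_(i < N) ((osc i)%:E * Q))%E).
    apply: lee_sum => i _.
    have [r [r0 rAB hlen]] := len_bound t i tT (ltn_ord i).
    rewrite EFinM; apply: lee_wpmul2l; first by rewrite lee_fin normr_ge0.
    apply: (@le_trans _ _ (n * (1 + T * r))%:E); first by rewrite lee_fin.
    rewrite EFinM /Q; apply: lee_wpmul2l; first by rewrite lee_fin ltW.
    rewrite /P EFinD EFinM -muleA; apply: leeD2l.
    by apply: lee_wpmul2l => //; rewrite lee_fin.
  rewrite -ge0_sume_distrl; last by move=> i _; rewrite lee_fin normr_ge0.
  by apply: lee_wpmul2r => //; rewrite sumEFin; exact: osc_TV.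
have TVQ2 : ((\sum_(i < N) `|vg i.+1 - vg i| * n)%:E <= TV u0 * Q)%E.
  rewrite -mulr_suml EFinM.
  apply: le_trans (lee_wpmul2r _ c_TV) _; first by rewrite lee_fin ltW.
  apply: lee_wpmul2l; first exact: TV_ge0.
  rewrite /Q -{1}(mule1 (n%:E)); apply: lee_wpmul2l; first by rewrite lee_fin ltW.
  apply: leeDl; apply: mule_ge0; last exact: SB_ge0.
  by apply: mule_ge0; [rewrite lee_fin | exact: SA_ge0].
have -> : (2%:E * n%:E * TV u0 * P = TV u0 * Q + TV u0 * Q)%E.
  rewrite -[X in (X + X)%E]mul1e -ge0_muleDl ?lee01 // -EFinD.
  by rewrite -!muleA /Q (muleCA (TV u0)).
by rewrite EFinD; apply: leeD.
Qed.

End Grid.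

Lemma main_exists K : (0 < K)%N ->
  exists (H : lrnr2 R) (a1 b1 c1 d1 a2 b2 c2 d2 : 'I_3 -> R),
      lrnr2_wf H /\
      (K%:R <= (33 : R) * (lrnr2_dof H)%:R /\ (lrnr2_dof H)%:R <= (33 : R) * K%:R) /\
      (K%:R <= (33 : R) * (lwidth H)%:R /\ (lwidth H)%:R <= (33 : R) * K%:R) /\
      forall t : R, 0 < t < T ->
            (\int[lebesgue_measure]_(x in (@Omx R))
                (`| u x t - lrnr2_eval H (affc a1 b1 t) (affc c1 d1 t)
                                        (affc a2 b2 t) (affc c2 d2 t) x |)%:E
             <= (2 : R)%:E * (K%:R^-1)%:E * TV u0 *
                (1 + T%:E * supnorm (derive1n 2 F) (u0 @` (@Omx R))
                          * supnorm (derive1 u0) (@Omx R)))%E.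
Proof.
move=> K0.
have [xi Hxi] : {xi : nat -> R & forall i, (i < K)%N ->
    (xg K i <= xi i <= xg K i.+1) /\
    forall z, xg K i <= z <= xg K i.+1 -> `|u0 z - vg K i| <= `|u0 (xi i) - vg K i|}.
  apply: (@choice _ _ (fun i x => (i < K)%N -> (xg K i <= x <= xg K i.+1) /\
    forall z, xg K i <= z <= xg K i.+1 -> `|u0 z - vg K i| <= `|u0 x - vg K i|)).
  move=> i.
  have [c cin cmax] := @EVT_max R (fun z => `|u0 z - vg K i|) (xg K i) (xg K i.+1)
     (ltW (xg_lt K K0 i i.+1 (ltnSn i))) (continuous_subspaceT (fun z =>
        continuous_comp (continuousB (u0_cont z) (cvg_cst _)) (@norm_continuous _ _ _))).
  exists c => _; split; first by move: cin; rewrite in_itv.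
  by move=> z hzz; apply: cmax; rewrite in_itv.
have Hxi1 : forall i, (i < K)%N -> forall z, xg K i <= z <= xg K i.+1 ->
    `|u0 z - vg K i| <= `|u0 (xi i) - vg K i| by move=> i iK; case: (Hxi i iK).
have Hxi2 : forall i, (i < K)%N -> xg K i <= xi i <= xg K i.+1 by move=> i iK; case: (Hxi i iK).
pose eps : R := K%:R^-1.
pose Wv k := if (k < K)%N then (vg K k.+1 - vg K k) / eps else - ((vg K (k - K).+1 - vg K (k - K)) / eps).
pose P0 k := if (k < K)%N then - xg K k.+1 else - xg K (k - K).+1 - eps.
pose P1 k := if (k < K)%N then - derive1 F (vg K k.+1) else - derive1 F (vg K (k - K).+1).
exists (netH R (K + K) Wv P0 P1), (fun _ => 1), (fun _ => 0), (c1 R), (d1 R),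
  (fun _ => 1), (fun _ => 0), (fun _ => 1), (fun _ => 0).
split; first by apply: netH_wf; rewrite addn_gt0 K0.
split.
  by rewrite netH_dof; split; rewrite -natrM ler_nat; lia.
split.
  by rewrite /=; split; rewrite -natrM ler_nat; lia.
move=> t tT.
have E : forall x, lrnr2_eval (netH R (K + K) Wv P0 P1) (affc (fun _ => 1) (fun _ => 0) t)
     (affc (c1 R) (d1 R) t) (affc (fun _ => 1) (fun _ => 0) t) (affc (fun _ => 1) (fun _ => 0) t) x
     = hf K t x.
  move=> x; rewrite netH_eval /hf big_split_ord /= -big_split /=.
  apply: eq_bigr => i _; rewrite /Wv /P0 /P1 /= ltn_ord ltnNge leq_addr /= addKn.
  rewrite /ramp /Xg /Xf /vg /eps.
  have -> : x + (- xg K i.+1 + t * - derive1 F (u0 (xg K i.+1))) =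
     x - (xg K i.+1 + t * derive1 F (u0 (xg K i.+1))) by ring.
  have -> : x + (- xg K i.+1 - K%:R^-1 + t * - derive1 F (u0 (xg K i.+1))) =
     x - (xg K i.+1 + t * derive1 F (u0 (xg K i.+1))) - K%:R^-1 by ring.
  ring.
under eq_integral => x _ do rewrite E.
exact: (int_bound K K0 xi Hxi1 Hxi2 t tT).
Qed.

End Main.

Theorem theorem4p6 (R : realType) :
  exists (C c : R), 0 < C /\ 0 < c /\
  forall (F : R -> R) (u0 : R -> R) (T : R) (u : R -> R -> R),
    (* F smooth and strictly convex *)
    (forall (n : nat) (x : R), derivable (derive1n n F) x 1) ->
    (forall x y l : R, x != y -> 0 < l -> l < 1 ->
       F (l * x + (1 - l) * y) < l * F x + (1 - l) * F y) ->
    (* u0 in C^1(Omega_x) *)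
    (forall x : R, 0 < x < 1 -> derivable u0 x 1) ->
    {within (@Omx R), continuous derive1 u0} ->
    (* u0 has compact support in Omega_x = (0,1) (extended by zero) *)
    (exists a b : R, [/\ 0 < a, b < 1 & forall x, (x < a) || (b < x) -> u0 x = 0]) ->
    (* u0 of bounded variation *)
    (TV u0 < +oo)%E ->
    0 < T ->
    (* the classical characteristic map X(.,t) is strictly increasing on Omega_x *)
    (forall t : R, 0 < t < T ->
       {in `]0, 1[ &, {homo (fun x => x + t * derive1 F (u0 x)) : x y / x < y}}) ->
    (* u(.,t) = u0 o X^{-1}(.,t) is the classical solution *)
    (forall t : R, 0 < t < T -> forall x : R, u (x + t * derive1 F (u0 x)) t = u0 x) ->
    forall K : nat, (0 < K)%N ->
    exists (H : lrnr2 R) (a1 b1 c1 d1 a2 b2 c2 d2 : 'I_3 -> R),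
      lrnr2_wf H /\
      (K%:R <= c * (lrnr2_dof H)%:R /\ (lrnr2_dof H)%:R <= c * K%:R) /\
      (K%:R <= c * (lwidth H)%:R /\ (lwidth H)%:R <= c * K%:R) /\
      forall t : R, 0 < t < T ->
            (\int[lebesgue_measure]_(x in (@Omx R))
                (`| u x t - lrnr2_eval H (affc a1 b1 t) (affc c1 d1 t)
                                        (affc a2 b2 t) (affc c2 d2 t) x |)%:E
             <= C%:E * (K%:R^-1)%:E * TV u0 *
                (1 + T%:E * supnorm (derive1n 2 F) (u0 @` (@Omx R))
                          * supnorm (derive1 u0) (@Omx R)))%E.
Proof.
exists 2, 33; split; first lra.
split; first lra.
move=> F u0 T u HF _ Hd _ [a0 [b0 [ha0 hb0 hz0]]] _ HT HX Hu K K0.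
have [a [b [ha hab hb hz]]] : exists a b : R,
    [/\ 0 < a, a <= b, b < 1 & forall x, (x < a) || (b < x) -> u0 x = 0].
  case: (leP a0 b0) => ab; first by exists a0, b0; split.
  exists (1 / 4), (1 / 2); split; try lra.
  move=> x _; apply: hz0; case: (ltP x a0) => xa //=.
  lra.
exact: (main_exists R F u0 T u a b HF Hd ha hab hb hz HX Hu K K0).
Qed.
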